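(* Let $Q$ be a polyhedral partially ordered abelian group and $D\subseteq Q$ a downset. Then $D=\bigcup_\tau P_\tau(D)$, the union over all faces $\tau$ of $Q_+$ for which $\Gamma_\tau(D_\tau)$ is nonempty, and this is a primary decomposition of $D$ (each $P_\tau(D)$ is a coprimary downset).
   Context: A partially ordered abelian group is an abelian group $Q$ generated by a submonoid $Q_+$ (positive cone) whose only unit is $0$; $q\preceq q'$ iff $q'-q\in Q_+$. A face is a submonoid $\sigma\subseteq Q_+$ such that $Q_+\setminus\sigma$ is an ideal of the monoid $Q_+$; $Q$ is polyhedral if there are finitely many faces. A downset is a subset $D\subseteq Q$ with $D-Q_+=D$. For a face $\tau$: $D_\tau=\{q\in D: q+\tau\subseteq D\}$; $q\in D$ is globally supported on $\tau$ if $q\notin D_{\tau'}$ for all faces $\tau'\not\subseteq\tau$, and $\Gamma_\tau D$ is the set of such $q$; the local $\tau$-support is $\Gamma_\tau(D_\tau)$ (elements of $D_\tau$ globally supported on $\tau$ within the downset $D_\tau$); the $\tau$-primary component is the downset $P_\tau(D)=\Gamma_\tau(D_\tau)-Q_+$. A downset $D$ is coprimary ($\tau$-coprimary) if $D=P_\tau(D)$ for some face $\tau$. A primary decomposition of $D$ is an expression $D=\bigcup_{i=1}^r D_i$ with each $D_i$ a coprimary downset. *)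

(* Defs.v *)
From mathcomp Require Import all_boot all_algebra.
From mathcomp Require Import boolp classical_sets cardinality.
Set Implicit Arguments. Unset Strict Implicit. Unset Printing Implicit Defensive.
Import GRing.Theory.
Local Open Scope ring_scope.
Local Open Scope classical_set_scope.

Section PosetGroup.
Variable Q : zmodType.

Definition submonoid (S : set Q) : Prop :=
  S 0 /\ forall a b, S a -> S b -> S (a + b).

Definition positive_cone (Qp : set Q) : Prop :=
  [/\ submonoid Qp,
      (forall a, Qp a -> Qp (- a) -> a = 0) &
      (forall q, exists a b, [/\ Qp a, Qp b & q = a - b])].

Definition monoid_ideal (Qp I : set Q) : Prop :=
  I `<=` Qp /\ forall a b, I a -> Qp b -> I (a + b).

Definition face (Qp sigma : set Q) : Prop :=
  [/\ submonoid sigma, sigma `<=` Qp & monoid_ideal Qp (Qp `\` sigma)].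

Definition polyhedral (Qp : set Q) : Prop :=
  finite_set [set sigma : set Q | face Qp sigma].

Definition minus_cone (Qp D : set Q) : set Q :=
  [set q | exists x a, [/\ D x, Qp a & q = x - a]].

Definition downset (Qp D : set Q) : Prop := minus_cone Qp D = D.

Definition Dface (tau D : set Q) : set Q :=
  [set q | D q /\ forall t, tau t -> D (q + t)].

Definition Gamma (Qp tau D : set Q) : set Q :=
  [set q | D q /\ forall tau', face Qp tau' -> ~ (tau' `<=` tau) ->
                               ~ Dface tau' D q].

Definition primary_comp (Qp tau D : set Q) : set Q :=
  minus_cone Qp (Gamma Qp tau (Dface tau D)).

Definition coprimary (Qp D : set Q) : Prop :=
  downset Qp D /\ exists tau, face Qp tau /\ D = primary_comp Qp tau D.

End PosetGroup.

(* Main.v *)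
Require Import Defs.
From mathcomp Require Import all_boot all_algebra.
From mathcomp Require Import boolp classical_sets functions cardinality.
Local Open Scope classical_set_scope.

Import GRing.Theory.

Lemma finite_enum (T : Type) (A : set (set T)) : finite_set A ->
  exists n (g : nat -> set T), forall x, A x -> exists2 k, (k < n)%N & g k = x.
Proof.
case=> n /card_esym /pcard_eqP [g]; exists n, (g : nat -> _) => x Ax.
have [k kn <-] := 'surj_g Ax; by exists k.
Qed.

Lemma max_ex (X : Type) (g : nat -> set X) (P : set X -> Prop) n :
  (forall x, P x -> exists2 k, (k < n)%N & g k = x) ->
  forall x0, P x0 -> exists x, P x /\ forall y, P y -> x `<=` y -> y `<=` x.
Proof.
move=> hg x0 Px0.
have claim : forall m, (exists k, (k < m)%N /\ P (g k)) ->
   exists i, [/\ (i < m)%N, P (g i) &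
     forall j, (j < m)%N -> P (g j) -> g i `<=` g j -> g j `<=` g i].
  elim=> [|m IH]; first by case=> k [].
  move=> [k0 [k0m Pk0]].
  have [[k [km Pk]]|no] := pselect (exists k, (k < m)%N /\ P (g k)).
    have [i [im Pi Hi]] := IH (ex_intro _ k (conj km Pk)).
    have [[Pm [sim nmi]]|yes] := pselect (P (g m) /\ g i `<=` g m /\ ~ g m `<=` g i).
      exists m; split => // j; rewrite ltnS leq_eqVlt => /orP[/eqP->//|jm] Pj smj.
      have := Hi j jm Pj (subset_trans sim smj) => sji.
      exact: subset_trans sji sim.
    exists i; split => //; first exact: ltn_trans im _.
    move=> j; rewrite ltnS leq_eqVlt => /orP[/eqP->|jm] Pj sij; last exact: Hi.
    by apply: contrapT => nmi; apply: yes.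
  have Pm : P (g m).
    move: k0m Pk0; rewrite ltnS leq_eqVlt => /orP[/eqP->//|k0m] Pk0.
    by exfalso; apply: no; exists k0.
  exists m; split => // j; rewrite ltnS leq_eqVlt => /orP[/eqP->//|jm] Pj.
  by exfalso; apply: no; exists j.
have [k kn gk] := hg _ Px0.
have [i [_ Pi Hi]] := claim n (ex_intro _ k (conj kn (eq_ind_r P Px0 gk))).
exists (g i); split => // y Py siy.
have [j jn gj] := hg _ Py; subst y.
by apply: Hi.
Qed.

Section Main.
Local Open Scope ring_scope.
Variable Q : zmodType.
Variable Qp : set Q.
Hypothesis hQ : positive_cone Qp.

Let Qp0 : Qp 0. Proof. by case: hQ => -[]. Qed.
Let QpD a b : Qp a -> Qp b -> Qp (a + b). Proof. by case: hQ => -[_ h] *; apply: h. Qed.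

Lemma down_sub (D : set Q) (x a : Q) : downset Qp D -> D x -> Qp a -> D (x - a).
Proof. by move=> hD Dx Qa; rewrite -hD; exists x, a. Qed.

Lemma minus_cone_mono (X Y : set Q) : X `<=` Y -> minus_cone Qp X `<=` minus_cone Qp Y.
Proof. by move=> XY q [x [a [Xx Qa ->]]]; exists x, a; split => //; apply: XY. Qed.

Lemma minus_cone_down (X : set Q) : downset Qp (minus_cone Qp X).
Proof.
rewrite /downset; apply/seteqP; split => q.
  move=> [y [a [[x [b [Xx Qb ->]]] Qa ->]]].
  exists x, (b + a); split => //; first exact: QpD.
  by rewrite opprD addrA.
move=> Mq; exists q, 0; split => //; by rewrite subr0.
Qed.

Lemma minus_cone_self (X : set Q) : X `<=` minus_cone Qp X.
Proof. by move=> q Xq; exists q, 0; split => //; rewrite subr0. Qed.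

Lemma Dface_down (tau D : set Q) : downset Qp D -> downset Qp (Dface tau D).
Proof.
move=> hD; rewrite /downset; apply/seteqP; split => q; last first.
  by move=> Dq; exists q, 0; split => //; rewrite subr0.
move=> [x [a [[Dx Hx] Qa ->]]]; split; first exact: down_sub.
by move=> t taut; rewrite addrAC; apply: down_sub => //; apply: Hx.
Qed.

Lemma Gamma_sub (tau X : set Q) : Gamma Qp tau X `<=` X.
Proof. by move=> q []. Qed.

Lemma Dface_sub (tau X : set Q) : Dface tau X `<=` X.
Proof. by move=> q []. Qed.

Lemma face0 : face Qp [set 0].
Proof.
split.
- by split => // a b -> ->; rewrite addr0.
- by move=> a ->.
- split; first by move=> a [].
  move=> a b [Qa na] Qb; split; first exact: QpD.
  move=> /= /eqP; rewrite addr_eq0 => /eqP ab; apply: na => /=.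
  have b0 : b = 0.
    case: hQ => _ hu _; apply: hu => //; by rewrite -ab.
  by rewrite ab b0 oppr0.
Qed.

Lemma primary_idem (tau D : set Q) : face Qp tau -> downset Qp D ->
  primary_comp Qp tau (primary_comp Qp tau D) = primary_comp Qp tau D.
Proof.
move=> [[tau0 tauD] tauQ _] hD.
set E := primary_comp Qp tau D.
have EDt : E `<=` Dface tau D.
  rewrite -(Dface_down tau D hD); apply: minus_cone_mono; exact: Gamma_sub.
apply/seteqP; split.
  have dE : downset Qp E := minus_cone_down _.
  move=> q Pq; rewrite -dE; move: q Pq.
  by apply: minus_cone_mono => q /Gamma_sub /Dface_sub.
apply: minus_cone_mono => q [[Dq Hq] Hsupp]; split.
  split; first by apply: minus_cone_self; split => //; split.
  move=> t taut; apply: minus_cone_self; split.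
    split; first exact: Hq.
    by move=> s taus; rewrite -addrA; apply: Hq; apply: tauD.
  move=> tau' ftau' ntau' [_ H]; apply: (Hsupp tau' ftau' ntau'); split => //.
  move=> s taus'; have := H s taus'.
  have -> : q + s = q + t + s - t by rewrite addrAC addrK.
  by move=> Hqts; apply: down_sub => //; [exact: Dface_down | apply: tauQ].
move=> tau' ftau' ntau' [_ H]; apply: (Hsupp tau' ftau' ntau'); split.
  by split.
by move=> s taus'; apply: EDt; have [] := H s taus'.
Qed.


Lemma exists_gamma (D : set Q) q : polyhedral Qp -> downset Qp D -> D q ->
  exists tau, face Qp tau /\ Gamma Qp tau (Dface tau D) q.
Proof.
move=> hpoly hD Dq.
have [n [g hg]] := @finite_enum _ [set sigma : set Q | face Qp sigma] hpoly.
pose P := fun tau : set Q => face Qp tau /\ Dface tau D q.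
have hgP : forall x, P x -> exists2 k, (k < n)%N & g k = x.
  by move=> x [fx _]; apply: hg.
have P0 : P [set 0].
  split; first exact: face0.
  by split => // t ->; rewrite addr0.
have [tau [[ftau Dtq] Hmax]] := @max_ex _ g P n hgP _ P0.
exists tau; split => //; split => // tau' ftau' ntau' [_ H].
have [[tau0 tauD] tauQ _] := ftau.
have [[tau'0 tau'D] tau'Q _] := ftau'.
pose sigma := [set a | Qp a /\ exists b t s, [/\ Qp b, tau t, tau' s & a + b = t + s]].
have fsigma : face Qp sigma.
  split.
  - split.
      split => //; exists 0, 0, 0; split => //; by rewrite addr0.
    move=> a1 a2 [Qa1 [b1 [t1 [s1 [Qb1 t1t s1t e1]]]]] [Qa2 [b2 [t2 [s2 [Qb2 t2t s2t e2]]]]].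
    split; first exact: QpD.
    exists (b1 + b2), (t1 + t2), (s1 + s2); split; [exact: QpD|exact: tauD|exact: tau'D|].
    by rewrite addrACA e1 e2 addrACA.
  - by move=> a [].
  - split; first by move=> a [].
    move=> a c [Qa na] Qc; split; first exact: QpD.
    move=> [_ [b [t [s [Qb tt st e]]]]]; apply: na; split => //.
    exists (c + b), t, s; split => //; first exact: QpD.
    by rewrite addrA.
have Dsq : Dface sigma D q.
  split => // a [Qa [b [t [s [Qb tt st e]]]]].
  have -> : q + a = q + s + t - b.
    by rewrite -(addrA q s t) (addrC s t) -e addrA addrK.
  apply: down_sub => //; have [_ Hs] := H s st; exact: Hs.
have tausig : tau `<=` sigma.
  move=> t tt; split; first exact: tauQ.
  by exists 0, t, 0; split => //; rewrite !addr0.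
have sigtau := Hmax sigma (conj fsigma Dsq) tausig.
apply: ntau' => s st; apply: sigtau; split; first exact: tau'Q.
by exists 0, 0, s; split => //; rewrite addr0 add0r.
Qed.

End Main.

Theorem corollary3p11 (Q : zmodType) (Qp : set Q)
  (hQ : positive_cone Qp) (hpoly : polyhedral Qp)
  (D : set Q) (hD : downset Qp D) :
  D = \bigcup_(tau in [set tau : set Q |
                        face Qp tau /\ Gamma Qp tau (Dface tau D) !=set0])
        primary_comp Qp tau D
  /\ (forall tau : set Q, face Qp tau -> Gamma Qp tau (Dface tau D) !=set0 ->
        coprimary Qp (primary_comp Qp tau D)).
Proof.
split.
  apply/seteqP; split.
    move=> q Dq; have [tau [ftau G]] := @exists_gamma _ _ hQ _ _ hpoly hD Dq.
    exists tau; first by split => //; exists q.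
    exact: minus_cone_self.
  move=> q [tau _ Pq]; rewrite -hD; move: q Pq; apply: minus_cone_mono.
  by move=> q /Gamma_sub /Dface_sub.
move=> tau ftau _; split; first exact: minus_cone_down.
by exists tau; split => //; rewrite primary_idem.
Qed.
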